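(* Let $x=(x_n)_{n\in\mathbb{Z}}$ be a real-valued sequence and let $i,j$ be two integers in the same connected component of the record graph of $x$. Then $i<j$ in $\mathbb{Z}$ if and only if $i\prec j$ in the RLS order of that component.
   Context: The record map is $R_x(i)=\inf\{n>i: \sum_{l=i}^{n-1}x_l\ge0\}$ if this set is nonempty, and $R_x(i)=i$ otherwise; the record graph has vertex set $\mathbb{Z}$ and directed edges $i\to R_x(i)$ for $R_x(i)\neq i$ (so $R_x(i)$ is the parent of $i$); components are in the undirected sense. Each component is an ordered Family Tree with the children of each vertex ordered by the order of $\mathbb{Z}$. Its RLS order $\prec$: for distinct vertices $u,v$, $u\prec v$ if $v=R_x^k(u)$ for some $k>0$, or if $w=R_x^m(u)=R_x^n(v)$ is their common ancestor with $m,n\ge1$ minimal and $R_x^{m-1}(u)<R_x^{n-1}(v)$ (comparison as children of $w$). *)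

(* Defs.v *)
From Stdlib Require Import Reals ZArith Lia ClassicalEpsilon Relations.
Open Scope R_scope.

Fixpoint psum (x : Z -> R) (i : Z) (k : nat) : R :=
  match k with
  | O => 0
  | S k' => psum x i k' + x (i + Z.of_nat k')%Z
  end.

Definition blocksum (x : Z -> R) (i n : Z) : R := psum x i (Z.to_nat (n - i)).

Definition recset (x : Z -> R) (i n : Z) : Prop :=
  (i < n)%Z /\ blocksum x i n >= 0.

(* n is the value of the record map at i: the infimum (= minimum, the set
   being a set of integers bounded below) of recset if nonempty, i otherwise. *)
Definition is_record_value (x : Z -> R) (i n : Z) : Prop :=
  (recset x i n /\ forall m, recset x i m -> (n <= m)%Z)
  \/ ((forall m, ~ recset x i m) /\ n = i).

Definition recmap (x : Z -> R) (i : Z) : Z :=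
  epsilon (inhabits i) (fun n => is_record_value x i n).

Definition rec_edge (x : Z -> R) (i j : Z) : Prop :=
  recmap x i <> i /\ j = recmap x i.

Definition same_component (x : Z -> R) (i j : Z) : Prop :=
  clos_refl_sym_trans Z (rec_edge x) i j.

Definition recit (x : Z -> R) (k : nat) (u : Z) : Z := Nat.iter k (recmap x) u.

Definition rls_lt (x : Z -> R) (u v : Z) : Prop :=
  u <> v /\
  ((exists k : nat, (0 < k)%nat /\ v = recit x k u)
   \/
   (exists m n : nat,
      (1 <= m)%nat /\ (1 <= n)%nat /\ recit x m u = recit x n v /\
      (forall m' n' : nat, (1 <= m')%nat -> (1 <= n')%nat ->
          recit x m' u = recit x n' v -> (m <= m')%nat /\ (n <= n')%nat) /\
      (recit x (m - 1) u < recit x (n - 1) v)%Z)).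

(* Main.v *)
Require Import Defs.
From Stdlib Require Import Reals ZArith.
From Stdlib Require Import Lia Lra Classical ClassicalEpsilon Relations.

Lemma nat_least (P : nat -> Prop) : (exists n, P n) -> exists n, P n /\ forall m, P m -> (n <= m)%nat.
Proof.
  intros [n0 Hn0].
  destruct (classic (exists n, P n /\ forall m, P m -> (n <= m)%nat)) as [H|H]; auto.
  exfalso.
  assert (forall N k, (k < N)%nat -> ~ P k).
  { induction N; intros k Hk Pk; [lia|].
    apply H. exists k. split; auto. intros m Pm.
    destruct (le_lt_dec k m); auto. exfalso. apply (IHN m); [lia|auto]. }
  apply (H0 (S n0) n0); auto.
Qed.

Lemma psum_add x c p q : psum x c (p + q) = psum x c p + psum x (c + Z.of_nat p) q.
Proof.
  induction q; simpl.
  - rewrite Nat.add_0_r; lra.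
  - rewrite Nat.add_succ_r. simpl. rewrite IHq.
    replace (c + Z.of_nat (p + q))%Z with (c + Z.of_nat p + Z.of_nat q)%Z by lia. lra.
Qed.

Lemma blocksum_add x c b r : (c < b < r)%Z -> blocksum x c r = blocksum x c b + blocksum x b r.
Proof.
  intros H. unfold blocksum.
  replace (Z.to_nat (r - c)) with (Z.to_nat (b - c) + Z.to_nat (r - b))%nat by lia.
  rewrite psum_add. f_equal. f_equal. f_equal. lia.
Qed.

Lemma rec_spec x i : is_record_value x i (recmap x i).
Proof.
  unfold recmap. apply epsilon_spec.
  destruct (classic (exists m, recset x i m)) as [[m Hm]|H].
  - destruct (nat_least (fun k => recset x i (i + 1 + Z.of_nat k)%Z)) as [k [Hk Hmin]].
    { exists (Z.to_nat (m - i - 1)). replace (i + 1 + Z.of_nat (Z.to_nat (m - i - 1)))%Z with m; auto.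
      destruct Hm; lia. }
    exists (i + 1 + Z.of_nat k)%Z. left. split; auto.
    intros m' Hm'. assert (Hl : (i < m')%Z) by (destruct Hm'; auto).
    specialize (Hmin (Z.to_nat (m' - i - 1))).
    replace (i + 1 + Z.of_nat (Z.to_nat (m' - i - 1)))%Z with m' in Hmin by lia.
    specialize (Hmin Hm'). lia.
  - exists i. right. split; auto. intros m Hm; apply H; eauto.
Qed.

Lemma recmap_ge x i : (i <= recmap x i)%Z.
Proof.
  destruct (rec_spec x i) as [[[H _] _]|[_ H]]; lia.
Qed.

Lemma P1 x c b : (c < b < recmap x c)%Z -> (recmap x b <= recmap x c)%Z.
Proof.
  intros H.
  destruct (rec_spec x c) as [[Hr Hmin]|[_ He]]; [|lia].
  assert (Hneg : blocksum x c b < 0).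
  { destruct (Rlt_or_le (blocksum x c b) 0); auto.
    assert (recset x c b) by (split; [lia|lra]). specialize (Hmin b H1). lia. }
  assert (Hb : recset x b (recmap x c)).
  { split; [lia|]. destruct Hr as [_ Hr].
    rewrite (blocksum_add x c b (recmap x c)) in Hr by lia. lra. }
  destruct (rec_spec x b) as [[_ Hmb]|[Hn _]]; [apply Hmb; auto|].
  exfalso; apply (Hn _ Hb).
Qed.

Lemma recit_succ_r x k u : recit x (S k) u = recit x k (recmap x u).
Proof.
  induction k; simpl; auto. unfold recit in *. simpl in *. rewrite <- IHk. auto.
Qed.

Lemma recit_add x a b u : recit x (a + b) u = recit x a (recit x b u).
Proof.
  induction a; simpl; auto. unfold recit in *. simpl. rewrite IHa. auto.
Qed.

Lemma recit_ge x p v : (v <= recit x p v)%Z.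
Proof.
  induction p; simpl; [lia|]. unfold recit in *; simpl.
  pose proof (recmap_ge x (Nat.iter p (recmap x) v)). lia.
Qed.

Lemma recit_mono x k k' u : (k <= k')%nat -> (recit x k u <= recit x k' u)%Z.
Proof.
  intros H. replace k' with ((k' - k) + k)%nat by lia.
  rewrite recit_add. apply recit_ge.
Qed.

Lemma desc x k : forall d top bar, recit x k d = top -> (d <= bar < top)%Z ->
  (top < recmap x bar)%Z -> False.
Proof.
  induction k; intros d top bar H1 H2 H3.
  - simpl in H1. lia.
  - rewrite recit_succ_r in H1.
    destruct (Z_le_gt_dec (recmap x d) bar).
    + apply (IHk (recmap x d) top bar); auto; lia.
    + pose proof (recit_ge x k (recmap x d)).
      destruct (Z.eq_dec d bar).
      * subst. lia.
      * assert (recmap x bar <= recmap x d)%Z by (apply P1; lia). lia.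
Qed.

Lemma comp_common x i j : same_component x i j -> exists k l, recit x k i = recit x l j.
Proof.
  intros H. induction H.
  - destruct H as [_ H]. exists 1%nat, 0%nat. simpl. auto.
  - exists 0%nat, 0%nat. auto.
  - destruct IHclos_refl_sym_trans as [k [l E]]. exists l, k. auto.
  - destruct IHclos_refl_sym_trans1 as [k [l E1]].
    destruct IHclos_refl_sym_trans2 as [p [q E2]].
    exists (p + k)%nat, (l + q)%nat.
    rewrite recit_add, E1, <- recit_add, Nat.add_comm, recit_add, E2, <- recit_add. auto.
Qed.

Theorem lemma2p22 (x : Z -> R) (i j : Z) :
  same_component x i j -> ((i < j)%Z <-> rls_lt x i j).
Proof.
  intros Hc. split.
  - intros Hij. split; [lia|].
    destruct (classic (exists k : nat, (0 < k)%nat /\ j = recit x k i)) as [H1|H1]; [left; auto|right].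
    destruct (comp_common x i j Hc) as [k [l E]].
    destruct (nat_least (fun m => (1 <= m)%nat /\ exists n, (1 <= n)%nat /\ recit x m i = recit x n j))
      as [m [[Hm1 [n0 [Hn0 E0]]] Hmmin]].
    { exists (S k). split; [lia|]. exists (S l). split; [lia|]. change (recmap x (recit x k i) = recmap x (recit x l j)). rewrite E. auto. }
    destruct (nat_least (fun n => (1 <= n)%nat /\ recit x m i = recit x n j))
      as [n [[Hn1 En] Hnmin]].
    { exists n0. auto. }
    exists m, n. split; [auto|]. split; [auto|]. split; [auto|]. split.
    + intros m' n' Hm' Hn' E'.
      assert (m <= m')%nat by (apply Hmmin; split; eauto).
      split; auto.
      destruct (le_lt_dec n n'); auto. exfalso.
      pose proof (recit_mono x n' n j ltac:(lia)).
      pose proof (recit_mono x m m' i H).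
      assert (n <= n')%nat by (apply Hnmin; split; [auto|lia]). lia.
    + destruct m as [|m1]; [lia|]. destruct n as [|n1]; [lia|].
      replace (S m1 - 1)%nat with m1 by lia. replace (S n1 - 1)%nat with n1 by lia.
      change (recmap x (recit x m1 i) = recmap x (recit x n1 j)) in En.
      set (a := recit x m1 i) in *. set (b := recit x n1 j) in *.
      pose proof (recit_ge x m1 i). pose proof (recit_ge x n1 j).
      pose proof (recmap_ge x a). pose proof (recmap_ge x b).
      destruct (Z.lt_trichotomy a b) as [Hab|[Hab|Hab]]; auto; exfalso.
      * destruct m1 as [|m2].
        { simpl in a. subst a. lia. }
        destruct n1 as [|n2].
        { apply H1. exists (S m2). split; [lia|]. subst a b. change (recit x 0 j) with j in Hab. rewrite <- Hab. auto. }
        assert (S (S m2) <= S m2)%nat; [|lia].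
        apply Hmmin. split; [lia|]. exists (S n2). split; [lia|]. fold a. fold b. auto.
      * destruct (Z.eq_dec (recmap x a) a) as [Hw|Hw].
        { destruct m1 as [|m2].
          { simpl in a. subst a. lia. }
          assert (S (S m2) <= S m2)%nat; [|lia].
          apply Hmmin. split; [lia|]. exists (S n1). split; [lia|].
          change (a = recmap x b). rewrite <- En. auto. }
        apply (desc x m1 i a b); auto; lia.
  - intros [Hne [[k [Hk E]]|[m [n [Hm [Hn [E [Hmin Hlt]]]]]]]].
    + pose proof (recit_ge x k i). destruct (Z_lt_le_dec i j); auto. lia.
    + destruct (Z_lt_le_dec i j) as [|Hji]; auto. exfalso.
      destruct m as [|m1]; [lia|]. destruct n as [|n1]; [lia|].
      replace (S m1 - 1)%nat with m1 in Hlt by lia. replace (S n1 - 1)%nat with n1 in Hlt by lia.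
      change (recmap x (recit x m1 i) = recmap x (recit x n1 j)) in E.
      set (a := recit x m1 i) in *. set (b := recit x n1 j) in *.
      pose proof (recit_ge x m1 i). pose proof (recit_ge x n1 j).
      pose proof (recmap_ge x a). pose proof (recmap_ge x b).
      destruct (Z.eq_dec (recmap x b) b) as [Hw|Hw].
      * destruct n1 as [|n2].
        { simpl in b. subst b. lia. }
        assert (S (S n2) <= S n2)%nat; [|lia].
        apply (Hmin (S m1) (S n2)); try lia.
        change (recmap x a = b). rewrite E. auto.
      * apply (desc x n1 j b a); auto; lia.
Qed.
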